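(* Let $G=(V,E)$ be a task-assistance graph and let $\pi=\langle v_0,\dots,v_k\rangle$ ($k\ge 1$) be a path in $G$ that admits at least one timing profile. Then there exists an optimal timing profile $\mathcal{T}=\langle t_0,\dots,t_{k-1}\rangle$ for $\pi$ such that $t_i\in C_i$ for every $i\in\{0,\dots,k-1\}$.
   Context: A task-assistance graph is a directed graph $G=(V,E)$ in which every edge $e$ has a length $\ell(e)\ge 0$ and every vertex $v$ has a finite set $\mathcal{I}(v)$ of closed intervals contained in $[0,1]$. A path is $\pi=\langle v_0,\dots,v_k\rangle$ with $(v_i,v_{i+1})\in E$; vertices may repeat, and all quantities below are attached to positions $i$ in the path. Set $\ell(v_{-1},v_0):=0$, $\ell(v_k,v_{k+1}):=0$, $\ell(v_i):=\sum_{j=0}^{i-1}\ell(v_j,v_{j+1})$, $\ell^+(v_i):=\ell(v_i)+\tfrac12\ell(v_i,v_{i+1})$, $\ell^-(v_i):=\ell(v_i)-\tfrac12\ell(v_{i-1},v_i)$, and $\ell^+(v_i,v_j):=\ell^+(v_j)-\ell^+(v_i)$ (for any positions $i,j$). A timing profile of $\pi$ is a sequence of reals $\langle t_0,\dots,t_{k-1}\rangle$ with $t_0\ge \ell^+(v_0)$, $t_{i+1}\ge t_i+\ell^+(v_i,v_{i+1})$ for $0\le i\le k-2$, and $t_{k-1}+\ell^+(v_{k-1},v_k)\le 1$. For a vertex $u$ and $0\le t\le t'\le 1$, $R(u,t,t'):=\sum_{I\in\mathcal{I}(u)}|[t,t']\cap I|$ (length of intersection). With $t_{-1}:=0$, $t_k:=1$,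 the reward of a timing profile is $R(\pi,\mathcal{T}):=\sum_{i=0}^{k}R(v_i,t_{i-1},t_i)$; a timing profile is optimal if it maximizes this reward over all timing profiles of $\pi$. Critical times: define augmented interval sets per position, $J_i:=\mathcal{I}(v_i)$ for $0<i<k$, $J_0:=\mathcal{I}(v_0)\cup\{[\ell^+(v_0),\ell^+(v_0)]\}$, $J_k:=\mathcal{I}(v_k)\cup\{[1-\ell^+(v_{k-1},v_k),\,1-\ell^+(v_{k-1},v_k)]\}$. For positions $0\le a<b\le k$ let $C(a,b):=\{t_e:[t_s,t_e]\in J_a\}\cup\{t_s-(\ell^-(v_b)-\ell^+(v_a)):[t_s,t_e]\in J_b\}$. For each position $i$, $C_i:=\bigcup_{0\le a<b\le k}\{\tau+\ell^+(v_a,v_i):\tau\in C(a,b)\}$. *)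

(* Defs.v *)
From HB Require Import structures.
From mathcomp Require Import all_boot all_order all_algebra.
From mathcomp Require Import reals.
Set Implicit Arguments. Unset Strict Implicit. Unset Printing Implicit Defensive.
Import Order.TTheory GRing.Theory Num.Theory.
Local Open Scope ring_scope.

(* A path pi = <v_0,...,v_k> is given by k and v : nat -> V (only v 0..v k matter).
   len u w = edge length l(u,w); intervals are pairs (s,e) meaning [s,e]. *)
Section TA.
Variables (R : realType) (V : Type) (len : V -> V -> R) (k : nat) (v : nat -> V).

(* length of edge leaving position i: l(v_i,v_{i+1}), with l(v_k,v_{k+1}) := 0 *)
Definition eout (i : nat) : R := if (i < k)%N then len (v i) (v i.+1) else 0.
(* length of edge entering position i: l(v_{i-1},v_i), with l(v_{-1},v_0) := 0 *)
Definition ein (i : nat) : R := if i is j.+1 then eout j else 0.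
Definition lpos (i : nat) : R := \sum_(j < i) eout j.
Definition lplus (i : nat) : R := lpos i + eout i / 2.
Definition lminus (i : nat) : R := lpos i - ein i / 2.
Definition lplus2 (i j : nat) : R := lplus j - lplus i.

(* t : nat -> R represents <t_0,...,t_{k-1}> (values at i >= k are irrelevant) *)
Definition is_timing_profile (t : nat -> R) : Prop :=
  [/\ lplus 0 <= t 0%N,
      (forall i : nat, (i.+2 <= k)%N -> t i + lplus2 i i.+1 <= t i.+1)
    & t k.-1 + lplus2 k.-1 k <= 1].

Definition ilen (t t' : R) (I : R * R) : R :=
  Num.max 0 (Num.min t' I.2 - Num.max t I.1).

Definition Rew (Iv : V -> seq (R * R)) (u : V) (t t' : R) : R :=
  \sum_(I <- Iv u) ilen t t' I.

(* extended profile: t_{-1} := 0, t_k := 1 *)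
Definition tbefore (t : nat -> R) (i : nat) : R := if i is j.+1 then t j else 0.
Definition tat (t : nat -> R) (i : nat) : R := if (i < k)%N then t i else 1.

Definition reward (Iv : V -> seq (R * R)) (t : nat -> R) : R :=
  \sum_(i < k.+1) Rew Iv (v i) (tbefore t i) (tat t i).

Definition optimal_profile (Iv : V -> seq (R * R)) (t : nat -> R) : Prop :=
  is_timing_profile t /\
  forall t' : nat -> R, is_timing_profile t' -> reward Iv t' <= reward Iv t.

Definition Jset (Iv : V -> seq (R * R)) (i : nat) : seq (R * R) :=
  if i == 0%N then Iv (v 0%N) ++ [:: (lplus 0, lplus 0)]
  else if i == k then Iv (v k) ++ [:: (1 - lplus2 k.-1 k, 1 - lplus2 k.-1 k)]
  else Iv (v i).

Definition inC2 (Iv : V -> seq (R * R)) (a b : nat) (tau : R) : Prop :=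
  (exists ts te : R, (ts, te) \in Jset Iv a /\ tau = te) \/
  (exists ts te : R, (ts, te) \in Jset Iv b /\ tau = ts - (lminus b - lplus a)).

Definition inCi (Iv : V -> seq (R * R)) (i : nat) (x : R) : Prop :=
  exists a b : nat, [/\ (a < b)%N, (b <= k)%N &
    exists tau : R, inC2 Iv a b tau /\ x = tau + lplus2 a i].

End TA.

(* Main.v *)
Require Import Defs.
From HB Require Import structures.
From mathcomp Require Import all_boot all_order all_algebra.
From mathcomp Require Import reals.
From mathcomp Require Import ring lra zify.
From Stdlib Require Import Classical FunctionalExtensionality.
Import Order.TTheory GRing.Theory Num.Theory.
Local Open Scope ring_scope.

Section Main.
Set Implicit Arguments.
Variables (R : realType) (V : Type) (len : V -> V -> R) (Iv : V -> seq (R * R))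
  (k : nat) (v : nat -> V).
Hypothesis Hk : (0 < k)%N.

Local Notation lp := (lplus len k v).
Local Notation lm := (lminus len k v).
Definition tu (u : nat -> R) : nat -> R := fun i => u i + lp i.
Definition UB : R := 1 - lp k.
Definition feas (u : nat -> R) : Prop :=
  [/\ 0 <= u 0%N, (forall i, (i.+2 <= k)%N -> u i <= u i.+1) & u k.-1 <= UB].

Lemma lminusS j : lm j.+1 = lp j.
Proof.
rewrite /lminus /lplus /lpos big_ord_recr /=. lra.
Qed.

Lemma feas_iff u : is_timing_profile len k v (tu u) <-> feas u.
Proof.
rewrite /is_timing_profile /feas /tu /lplus2 /UB.
have hk : k.-1.+1 = k by rewrite prednK.
split.
- case=> h0 h1 h2; split; first lra.
  + move=> i /h1; lra.
  + move: h2; lra.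
- case=> h0 h1 h2; split; first lra.
  + move=> i /h1; lra.
  + lra.
Qed.

Lemma feas_mono u : feas u -> forall i j, (i <= j)%N -> (j < k)%N -> u i <= u j.
Proof.
case=> _ h1 _ i j hij hj.
elim: j hij hj => [|j IH] hij hj.
  by have -> : i = 0%N by lia.
case: (ltnP i j.+1) => hi; last by have -> : i = j.+1 by lia.
apply: le_trans (IH _ _) (h1 _ _); lia.
Qed.

Lemma feas_bnd u : feas u -> forall i, (i < k)%N -> 0 <= u i /\ u i <= UB.
Proof.
move=> hf i hi; split.
  have := feas_mono hf 0%N i (leq0n i) hi; case: hf => h0 _ _; lra.
have := feas_mono hf i k.-1 (_ : (i <= k.-1)%N) (_ : (k.-1 < k)%N); case: hf => _ _ h2 H; have := H ltac:(lia) ltac:(lia); lra.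

Qed.


Local Notation J := (Jset len k v Iv).
Definition Dl : seq R :=
  [seq x.2 - lp a | a <- iota 0 k, x <- J a] ++
  [seq x.1 - lm b | b <- iota 1 k, x <- J b].

Lemma Iv_J i I : I \in Iv (v i) -> I \in J i.
Proof.
rewrite /Jset; case: eqP => [->|_]; first by rewrite mem_cat => ->.
by case: eqP => [->|_]; rewrite ?mem_cat => ->.
Qed.

Lemma De i I : (i < k)%N -> I \in J i -> I.2 - lp i \in Dl.
Proof.
move=> hi hI; rewrite mem_cat; apply/orP; left.
apply: (allpairs_f_dep (fun a (x : R * R) => x.2 - lp a)) => //.
by rewrite mem_iota.
Qed.

Lemma Ds j I : (j < k)%N -> I \in J j.+1 -> I.1 - lp j \in Dl.
Proof.
move=> hi hI; rewrite mem_cat; apply/orP; right.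
rewrite -lminusS.
apply: (allpairs_f_dep (fun a (x : R * R) => x.1 - lm a)) => //.
rewrite mem_iota; lia.
Qed.

Lemma D0 : 0 \in Dl.
Proof.
have := @De 0%N (lp 0%N, lp 0%N) Hk; rewrite subrr; apply.
by rewrite /Jset eqxx mem_cat mem_seq1 eqxx orbT.
Qed.

Lemma DU : UB \in Dl.
Proof.
have h := @Ds k.-1 (1 - lplus2 len k v k.-1 k, 1 - lplus2 len k v k.-1 k).
rewrite prednK // in h.
have -> : UB = (1 - lplus2 len k v k.-1 k, 1 - lplus2 len k v k.-1 k).1 - lp k.-1.
  by rewrite /UB /lplus2 /=; lra.
apply: h; first lia.
rewrite /Jset; have -> : (k == 0%N) = false by lia.
by rewrite eqxx mem_cat mem_seq1 eqxx orbT.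
Qed.

Lemma D_inCi i d : d \in Dl -> inCi len k v Iv i (d + lp i).
Proof.
rewrite mem_cat => /orP [] /allpairsPdep [a [I [ha hI ->]]]; rewrite mem_iota in ha.
- exists a, k; split; [lia|lia|]. exists I.2; split.
    by left; exists I.1, I.2; rewrite -surjective_pairing.
  by rewrite /lplus2; lra.
- exists 0%N, a; split; [lia|lia|]. exists (I.1 - (lm a - lp 0%N)); split.
    by right; exists I.1, I.2; rewrite -surjective_pairing.
  by rewrite /lplus2; lra.
Qed.


Definition mv (u : nat -> R) (p q : nat) (x : R) : nat -> R :=
  fun i => if (p <= i <= q)%N then x else u i.

Lemma cvx0 (A B C b a c : R) : 0 <= b - c -> 0 <= c - a ->
  (b - a) * C = (b - c) * A + (c - a) * B ->
  (b - a) * Num.max 0 C <= (b - c) * Num.max 0 A + (c - a) * Num.max 0 B.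
Proof.
move=> h1 h2 E.
have mx : forall X : R, (X <= 0 /\ Num.max 0 X = 0) \/ (0 <= X /\ Num.max 0 X = X).
  move=> X; case: (lerP X 0) => h; [left|right]; split => //; last exact: ltW.
case: (mx A) => [[hA ->]|[hA ->]]; case: (mx B) => [[hB ->]|[hB ->]];
case: (mx C) => [[hC ->]|[hC ->]]; nra.
Qed.

Section Conv.
Variables (a b c : R).
Hypotheses (hac : a <= c) (hcb : c <= b).
Hypothesis gap : forall d, d \in Dl -> d <= a \/ b <= d.

Definition af (F : R -> R) := (b - a) * F c = (b - c) * F a + (c - a) * F b.
Definition cv (F : R -> R) := (b - a) * F c <= (b - c) * F a + (c - a) * F b.

Lemma af_min (Y : R -> R) e :
  ((exists K, forall x, Y x = K) \/ (exists L, (forall x, Y x = x + L) /\ e - L \in Dl)) ->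
  af (fun x => Num.min (Y x) e).
Proof.
have h1 := hac; have h2 := hcb.
rewrite /af; case=> [[K hK]|[L [hL hD]]]; rewrite ?hK ?hL.
  by ring.
case: (gap _ hD) => h.
  have m1 : forall x, a <= x -> Num.min (x + L) e = e by move=> x hx; rewrite min_r //; lra.
  have hab : a <= b by lra. have ea := m1 a (lexx a). have eb := m1 b hab. have ec := m1 c hac. rewrite ea eb ec; ring.
have m1 : forall x, x <= b -> Num.min (x + L) e = x + L by move=> x hx; rewrite min_l //; lra.
have hab : a <= b by lra. have ea := m1 a hab. have eb := m1 b (lexx b). have ec := m1 c hcb. rewrite ea eb ec; ring.
Qed.

Lemma af_max (X : R -> R) s :
  ((exists K, forall x, X x = K) \/ (exists L, (forall x, X x = x + L) /\ s - L \in Dl)) ->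
  af (fun x => Num.max (X x) s).
Proof.
have h1 := hac; have h2 := hcb.
rewrite /af; case=> [[K hK]|[L [hL hD]]]; rewrite ?hK ?hL.
  by ring.
case: (gap _ hD) => h.
  have m1 : forall x, a <= x -> Num.max (x + L) s = x + L by move=> x hx; rewrite max_l //; lra.
  have hab : a <= b by lra. have ea := m1 a (lexx a). have eb := m1 b hab. have ec := m1 c hac. rewrite ea eb ec; ring.
have m1 : forall x, x <= b -> Num.max (x + L) s = s by move=> x hx; rewrite max_r //; lra.
have hab : a <= b by lra. have ea := m1 a hab. have eb := m1 b (lexx b). have ec := m1 c hcb. rewrite ea eb ec; ring.
Qed.

Lemma ilen_cv (X Y : R -> R) s e :
  ((exists K, forall x, X x = K) \/ (exists L, (forall x, X x = x + L) /\ s - L \in Dl)) ->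
  ((exists K, forall x, Y x = K) \/ (exists L, (forall x, Y x = x + L) /\ e - L \in Dl)) ->
  cv (fun x => ilen (X x) (Y x) (s, e)).
Proof.
have hac' := hac; have hcb' := hcb.
move=> hX hY; have h1 := @af_max X s hX; have h2 := @af_min Y e hY.
rewrite /cv /ilen /=.
move: h1 h2; rewrite /af.
set ma := Num.max (X a) s; set mb := Num.max (X b) s; set mc := Num.max (X c) s.
set na := Num.min (Y a) e; set nb := Num.min (Y b) e; set nc := Num.min (Y c) e.
move=> h1 h2.
apply: cvx0; [lra|lra|]. rewrite mulrBr h1 h2; ring.
Qed.

Definition Xsh i (X : R -> R) := (exists K, forall x, X x = K) \/
  (exists L, (forall x, X x = x + L) /\ forall y, y \in Iv (v i) -> y.1 - L \in Dl).
Definition Ysh i (Y : R -> R) := (exists K, forall x, Y x = K) \/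
  (exists L, (forall x, Y x = x + L) /\ forall y, y \in Iv (v i) -> y.2 - L \in Dl).

Lemma Rew_cv i X Y : Xsh i X -> Ysh i Y -> cv (fun x => Rew Iv (v i) (X x) (Y x)).
Proof.
move=> hX hY; rewrite /cv /Rew !mulr_sumr -big_split /= big_seq [X in _ <= X]big_seq.
apply: ler_sum => y hy.
have := @ilen_cv X Y y.1 y.2; rewrite -surjective_pairing; apply.
- case: hX => [h|[L [h1 h2]]]; [by left|right; exists L; split => //; exact: h2].
- case: hY => [h|[L [h1 h2]]]; [by left|right; exists L; split => //; exact: h2].
Qed.

Lemma reward_cv u p q : cv (fun x => reward k v Iv (tu (mv u p q x))).
Proof.
rewrite /cv /reward !mulr_sumr -big_split /=; apply: ler_sum => [[i hi]] _ /=.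
apply: (@Rew_cv i (fun x => tbefore (tu (mv u p q x)) i) (fun x => tat k (tu (mv u p q x)) i)).
- case: i hi => [|j] hj /=.
    by left; exists 0.
  rewrite /tu /mv; case: (boolP ((p <= j <= q)%N)) => hpq.
    right; exists (lp j); split; first by move=> x.
    move=> y hy; apply: Ds; [lia|exact: Iv_J].
  by left; exists (u j + lp j) => x.
- rewrite /tat /tu /mv; case: (ltnP i k) => hik.
    case: (boolP ((p <= i <= q)%N)) => hpq.
      right; exists (lp i); split; first by move=> x.
      move=> y hy; apply: De => //; exact: Iv_J.
    by left; exists (u i + lp i) => x.
  by left; exists 1 => x.
Qed.

End Conv.


Lemma mv_in u p q x j : (p <= j <= q)%N -> mv u p q x j = x.
Proof. by rewrite /mv => ->. Qed.
Lemma mv_out u p q x j : ~~ (p <= j <= q)%N -> mv u p q x j = u j.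
Proof. by rewrite /mv => /negbTE ->. Qed.

Lemma feas_mv u p q x : feas u -> (p <= q)%N -> (q < k)%N ->
  (p = 0%N -> 0 <= x) -> ((0 < p)%N -> u p.-1 <= x) ->
  (q = k.-1 -> x <= UB) -> ((q < k.-1)%N -> x <= u q.+1) ->
  feas (mv u p q x).
Proof.
move=> hf hpq hqk H1 H2 H3 H4; have hf' := hf; case: hf' => f0 f1 f2; split.
- case: (boolP (p <= 0 <= q)%N) => h.
    rewrite mv_in //; apply: H1; lia.
  by rewrite mv_out.
- move=> i hi.
  case: (boolP (p <= i <= q)%N) => h1; case: (boolP (p <= i.+1 <= q)%N) => h2.
  + by rewrite !mv_in.
  + rewrite mv_in // mv_out //.
    have -> : i = q by lia.
    apply: H4; lia.
  + rewrite mv_out // mv_in //.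
    have -> : i = p.-1 by lia.
    apply: H2; lia.
  + rewrite !mv_out //; exact: f1.
- case: (boolP (p <= k.-1 <= q)%N) => h.
    rewrite mv_in //; apply: H3; lia.
  by rewrite mv_out.
Qed.

Definition fstart (u : nat -> R) (i : nat) : bool :=
  (u i \notin Dl) && ((i == 0%N) || (u i.-1 != u i)).
Definition Nm (u : nat -> R) : nat := count (fstart u) (iota 0 k).

Lemma count_le (P Q : pred nat) (s : seq nat) :
  (forall x, x \in s -> P x -> Q x) -> (count P s <= count Q s)%N.
Proof.
elim: s => //= y s IH H.
have h1 : (count P s <= count Q s)%N by apply: IH => x hx; apply: H; rewrite inE hx orbT.
have h2 : P y -> Q y by apply: H; rewrite inE eqxx.
case: (P y) h2 => /=; last lia.
by move=> /(_ isT) ->; lia.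
Qed.

Lemma count_lt (P Q : pred nat) (s : seq nat) :
  (forall x, x \in s -> P x -> Q x) -> (exists2 x, x \in s & Q x && ~~ P x) ->
  (count P s < count Q s)%N.
Proof.
elim: s => [_ [x]|y s IH H [x hx hQP]] //=.
have h1 : forall x, x \in s -> P x -> Q x by move=> z hz; apply: H; rewrite inE hz orbT.
have h2 : P y -> Q y by apply: H; rewrite inE eqxx.
move: hx; rewrite inE => /orP [/eqP exy|hx].
  subst x; move: hQP => /andP [-> /negbTE ->] /=.
  have := @count_le P Q s h1; lia.
have := IH h1 (ex_intro2 _ _ x hx hQP).
case: (P y) h2 => /=; last lia.
by move=> /(_ isT) ->; lia.
Qed.


Lemma Nm_mv u p q c x : (p <= q)%N -> (q < k)%N ->
  (forall j, (p <= j <= q)%N -> u j = c) -> c \notin Dl ->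
  (p = 0%N \/ u p.-1 != c) -> (q = k.-1 \/ u q.+1 != c) ->
  (x \in Dl \/ ((0 < p)%N /\ x = u p.-1) \/ ((q.+1 < k)%N /\ x = u q.+1)) ->
  (Nm (mv u p q x) < Nm u)%N.
Proof.
move=> hpq hqk hc cD hp hq hx.
have up : u p = c by apply: hc; lia.
have uq : u q = c by apply: hc; lia.
have fp : fstart u p.
  rewrite /fstart up cD /=; case: hp => [->|->] //; by rewrite orbT.
apply: count_lt.
- move=> j; rewrite mem_iota add0n => /andP [_ hj] H.
  case: (ltnP j p) => h1.
    have e1 : mv u p q x j = u j by apply: mv_out; lia.
    have e2 : mv u p q x j.-1 = u j.-1 by apply: mv_out; lia.
    by move: H; rewrite /fstart e1 e2.
  case: (ltnP q.+1 j) => h2.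
    have e1 : mv u p q x j = u j by apply: mv_out; lia.
    have e2 : mv u p q x j.-1 = u j.-1 by apply: mv_out; lia.
    by move: H; rewrite /fstart e1 e2.
  case: (eqVneq j p) => [ejp|njp]; first by rewrite ejp.
  case: (eqVneq j q.+1) => [ejq|njq].
    subst j.
    have e1 : mv u p q x q.+1 = u q.+1 by apply: mv_out; lia.
    have e2 : mv u p q x q = x by apply: mv_in; lia.
    move: H; rewrite /fstart /= e1 e2 => /andP [-> _] /=.
    rewrite uq; case: hq => [hq'|hq']; first lia.
    by rewrite eq_sym.
  have e1 : mv u p q x j = x by apply: mv_in; lia.
  have e2 : mv u p q x j.-1 = x by apply: mv_in; lia.
  move: H; rewrite /fstart e1 e2 eqxx orbF.
  have -> : (j == 0%N) = false by lia.
  by rewrite andbF.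
- case: (boolP (x \in Dl)) => xD.
    exists p; first by rewrite mem_iota; lia.
    rewrite fp /= /fstart negb_and; apply/orP; left.
    by rewrite mv_in ?xD //; lia.
  case: hx => [|[[h0 ex]|[h0 ex]]]; first by rewrite (negbTE xD).
    exists p; first by rewrite mem_iota; lia.
    rewrite fp /= /fstart negb_and; apply/orP; right.
    have e1 : mv u p q x p = x by apply: mv_in; lia.
    have e2 : mv u p q x p.-1 = u p.-1 by apply: mv_out; lia.
    rewrite e1 e2 ex eqxx orbF; lia.
  exists q.+1; first by rewrite mem_iota; lia.
  have e1 : mv u p q x q.+1 = u q.+1 by apply: mv_out; lia.
  have e2 : mv u p q x q = x by apply: mv_in; lia.
  rewrite /fstart /= e1 e2 -ex xD eqxx /= uq.
  case: hq => [hq'|hq']; first lia.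
  by rewrite andbT ex eq_sym.
Qed.


Lemma find_p (u : nat -> R) (c : R) i : u i = c -> exists p, [/\ (p <= i)%N, u p = c & (p = 0%N \/ u p.-1 != c)].
Proof.
elim: i => [|i IH] h; first by exists 0%N; split => //; left.
case: (eqVneq (u i) c) => e.
  have [p [h1 h2 h3]] := IH e; exists p; split => //; lia.
by exists i.+1; split => //; right.
Qed.

Lemma find_q (u : nat -> R) (c : R) n : forall i, (i + n)%N = k.-1 -> u i = c ->
  exists q, [/\ (i <= q)%N, (q < k)%N, u q = c & (q = k.-1 \/ u q.+1 != c)].
Proof.
elim: n => [|n IH] i hin hi.
  by exists i; split => //; [lia|left; lia].
case: (eqVneq (u i.+1) c) => e.
  have [|q [h1 h2 h3 h4]] := IH i.+1 _ e; first lia.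
  exists q; split => //; lia.
exists i; split => //; [lia|by right].
Qed.

Lemma find_lo (lo c : R) (s : seq R) : lo < c -> exists a,
  [/\ lo <= a, a < c, (a = lo \/ a \in s) & forall d, d \in s -> d < c -> d <= a].
Proof.
move=> h; elim: s => [|d s IH].
  by exists lo; split => //; left.
have [a [h1 h2 h3 h4]] := IH.
case hd: ((d < c) && (a < d)).
  move/andP: hd => [hd1 hd2]; exists d; split => //.
  - apply: le_trans h1 (ltW hd2).
  - by right; rewrite mem_head.
  - move=> d'; rewrite inE => /orP [/eqP -> _|hd' hd'c]; first exact: lexx.
    apply: le_trans (h4 _ hd' hd'c) (ltW hd2).
exists a; split => //.
- by case: h3 => [->|h']; [left|right; rewrite inE h' orbT].
- move=> d'; rewrite inE => /orP [/eqP -> hdc|hd' hd'c]; last exact: h4.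
  move: hd; rewrite hdc /= => /negbT; by rewrite -leNgt.
Qed.

Lemma find_hi (hi c : R) (s : seq R) : c < hi -> exists b,
  [/\ b <= hi, c < b, (b = hi \/ b \in s) & forall d, d \in s -> c < d -> b <= d].
Proof.
move=> h; elim: s => [|d s IH].
  by exists hi; split => //; left.
have [b [h1 h2 h3 h4]] := IH.
case hd: ((c < d) && (d < b)).
  move/andP: hd => [hd1 hd2]; exists d; split => //.
  - apply: le_trans (ltW hd2) h1.
  - by right; rewrite mem_head.
  - move=> d'; rewrite inE => /orP [/eqP -> _|hd' hd'c]; first exact: lexx.
    apply: le_trans (ltW hd2) (h4 _ hd' hd'c).
exists b; split => //.
- by case: h3 => [->|h']; [left|right; rewrite inE h' orbT].
- move=> d'; rewrite inE => /orP [/eqP -> hdc|hd' hd'c]; last exact: h4.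
  move: hd; rewrite hdc /= => /negbT; by rewrite -leNgt.
Qed.


Lemma aux_q q : (q < k)%N -> q <> k.-1 -> (q.+1 < k)%N.
Proof. lia. Qed.

Lemma step u : feas u -> (exists i, (i < k)%N /\ u i \notin Dl) ->
  exists u', [/\ feas u', (Nm u' < Nm u)%N &
    reward k v Iv (tu u) <= reward k v Iv (tu u')].
Proof.
move=> hf [i [hik hiD]].
set c := u i.
have [p [hpi hup hp]] := @find_p u c i erefl.
have [|q [hiq hqk huq hq]] := @find_q u c (k.-1 - i) i _ erefl; first lia.
have hc : forall j, (p <= j <= q)%N -> u j = c.
  move=> j /andP [h1 h2]; apply/eqP; rewrite eq_le; apply/andP; split.
    rewrite -huq; exact: feas_mono hf j q h2 hqk.
  rewrite -hup; apply: (feas_mono hf) => //; lia.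
have cD : c \notin Dl := hiD.
have [c0 cU] := feas_bnd hf i hik.
have hN : forall x, (x \in Dl \/ ((0 < p)%N /\ x = u p.-1) \/ ((q.+1 < k)%N /\ x = u q.+1)) ->
    (Nm (mv u p q x) < Nm u)%N.
  move=> x hx; apply: (@Nm_mv u p q c x) => //; exact: leq_trans hpi hiq.
set lo := if p == 0%N then 0 else u p.-1.
set hi := if q == k.-1 then UB else u q.+1.
have hlo : lo < c.
  rewrite /lo; case: eqP => hp0.
    rewrite lt_neqAle c0 andbT; apply/negP => /eqP e; move: cD; by rewrite -e D0.
  case: hp => // hp'; rewrite lt_neqAle hp' /= -hup; apply: (feas_mono hf) => //; lia.
have hhi : c < hi.
  rewrite /hi; case: eqP => hq0.
    rewrite lt_neqAle cU andbT; apply/negP => /eqP e; move: cD; by rewrite e DU.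
  case: hq => // hq'; rewrite lt_neqAle eq_sym hq' /= -huq; apply: (feas_mono hf) => //; lia.
have [a [ha1 ha2 ha3 ha4]] := @find_lo lo c Dl hlo.
have [b [hb1 hb2 hb3 hb4]] := @find_hi hi c Dl hhi.
have gap : forall d, d \in Dl -> d <= a \/ b <= d.
  move=> d hd; case: (ltgtP d c) => h.
  - by left; apply: ha4.
  - by right; apply: hb4.
  - by move: cD; rewrite -h hd.
have hcv := @reward_cv a b c (ltW ha2) (ltW hb2) gap u p q.
have eu : mv u p q c = u.
  apply: functional_extensionality => j; rewrite /mv; case: ifP => // h.
  by rewrite hc.
rewrite /cv eu in hcv.
have hfx : forall x, lo <= x -> x <= hi -> feas (mv u p q x).
  move=> x h1 h2; apply: feas_mv => //; first exact: leq_trans hpi hiq.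
  - by move=> p0; move: h1; rewrite /lo p0 eqxx.
  - by move=> pp; move: h1; rewrite /lo; have -> : (p == 0%N) = false by apply/negbTE; rewrite -lt0n.
  - by move=> qq; move: h2; rewrite /hi qq eqxx.
  - by move=> qq; move: h2; rewrite /hi; have -> : (q == k.-1) = false by apply/negbTE; rewrite neq_ltn qq.
set Ru := reward k v Iv (tu u) in hcv *.
set Ra := reward k v Iv (tu (mv u p q a)) in hcv *.
set Rb := reward k v Iv (tu (mv u p q b)) in hcv *.
case: (lerP Ru Ra) => hRa.
  exists (mv u p q a); split => //.
    apply: hfx => //; apply: le_trans (ltW ha2) (ltW hhi).
  apply: hN; case: ha3 => [ea|aD]; last by left.
  move: ea; rewrite /lo; case: eqP => hp0 ea; first by left; rewrite ea D0.
  right; left; split => //; rewrite lt0n; exact/eqP.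
case: (lerP Ru Rb) => hRb.
  exists (mv u p q b); split => //.
    apply: hfx => //; apply: le_trans (ltW hlo) (ltW hb2).
  apply: hN; case: hb3 => [eb|bD]; last by left.
  move: eb; rewrite /hi; case: eqP => hq0 eb; first by left; rewrite eb DU.
  right; right; split => //; exact: aux_q.
exfalso.
have h1 : (b - c) * Ra < (b - c) * Ru by rewrite ltr_pM2l // subr_gt0.
have h2 : (c - a) * Rb < (c - a) * Ru by rewrite ltr_pM2l // subr_gt0.
have h3 : (b - a) * Ru = (b - c) * Ru + (c - a) * Ru by ring.
lra.
Qed.

Lemma main_ind n : forall u, (Nm u <= n)%N -> feas u ->
  exists u', [/\ feas u', (forall i, (i < k)%N -> u' i \in Dl) &
    reward k v Iv (tu u) <= reward k v Iv (tu u')].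
Proof.
elim: n => [|n IH] u hN hf.
  case: (classic (exists i, (i < k)%N /\ u i \notin Dl)) => hex.
    have [u' [_ h _]] := step hf hex; lia.
  exists u; split => //; move=> i hi; case: (boolP (u i \in Dl)) => // hn.
  by exfalso; apply: hex; exists i.
case: (classic (exists i, (i < k)%N /\ u i \notin Dl)) => hex.
  have [u' [h1 h2 h3]] := step hf hex.
  have [|u'' [h4 h5 h6]] := IH u' _ h1; first lia.
  exists u''; split => //; exact: le_trans h3 h6.
exists u; split => //; move=> i hi; case: (boolP (u i \in Dl)) => // hn.
by exfalso; apply: hex; exists i.
Qed.


Fixpoint allseq (n : nat) : seq (seq R) :=
  if n is n'.+1 then [seq x :: s | x <- Dl, s <- allseq n'] else [:: [::]].

Lemma allseq_in n : forall w : nat -> R, (forall i, (i < n)%N -> w i \in Dl) ->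
  exists2 s, s \in allseq n & forall i, (i < n)%N -> nth 0 s i = w i.
Proof.
elim: n => [|n IH] w hw; first by exists [::]; rewrite ?inE.
have [s hs hs'] := IH (fun i => w i.+1) (fun i hi => hw i.+1 hi).
exists (w 0%N :: s).
  by apply: (allpairs_f (fun x s => x :: s)) => //; apply: hw.
by move=> [|i] hi //=; apply: hs'.
Qed.

Lemma allseq_D n s : s \in allseq n -> forall i, (i < n)%N -> nth 0 s i \in Dl.
Proof.
elim: n s => [|n IH] s //= hs i hi.
case/allpairsP: hs => [[x t] [hx ht ->]] /=.
by case: i hi => [|i] hi //=; apply: IH.
Qed.

Lemma argmax (T : eqType) (L : seq T) (P : T -> Prop) (f : T -> R) :
  (exists2 x, x \in L & P x) ->
  exists x, [/\ x \in L, P x & forall y, y \in L -> P y -> f y <= f x].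
Proof.
elim: L => [[x]|z L IH] //; move=> [x hx hPx].
case: (classic (exists2 x, x \in L & P x)) => hL.
  have [m [hm hPm hmax]] := IH hL.
  case: (classic (P z)) => hz.
    case: (lerP (f z) (f m)) => hzm.
      exists m; split => //; first by rewrite inE hm orbT.
      by move=> y; rewrite inE => /orP [/eqP -> _|hy hPy]; [|exact: hmax].
    exists z; split; [by rewrite mem_head|done|].
    move=> y; rewrite inE => /orP [/eqP -> _|hy hPy]; first exact: lexx.
    exact: le_trans (hmax _ hy hPy) (ltW hzm).
  exists m; split => //; first by rewrite inE hm orbT.
  move=> y; rewrite inE => /orP [/eqP -> hy|hy hPy]; [by []|exact: hmax].
exists z.
have ex : x = z.
  move: hx; rewrite inE => /orP [/eqP //|hx]; by exfalso; apply: hL; exists x.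
subst x; split; [by rewrite mem_head|done|].
move=> y; rewrite inE => /orP [/eqP -> _|hy hPy]; first exact: lexx.
by exfalso; apply: hL; exists y.
Qed.

Lemma feas_ext w w' : (forall i, (i < k)%N -> w i = w' i) -> feas w -> feas w'.
Proof.
move=> h [h0 h1 h2]; split.
- by rewrite -h.
- move=> i hi; rewrite -!h; [exact: h1|lia..].
- by rewrite -h //; lia.
Qed.

Lemma reward_ext w w' : (forall i, (i < k)%N -> w i = w' i) ->
  reward k v Iv (tu w) = reward k v Iv (tu w').
Proof.
move=> h; apply: eq_bigr => [[i hi]] _ /=.
congr Rew.
  by case: i hi => [|j] hj //=; rewrite /tu h.
by rewrite /tat; case: ifP => // h'; rewrite /tu h.
Qed.

Lemma final : (exists t, is_timing_profile len k v t) ->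
  exists t, optimal_profile len k v Iv t /\
    forall i, (i < k)%N -> inCi len k v Iv i (t i).
Proof.
have tuK : forall t : nat -> R, tu (fun i => t i - lp i) = t.
  by move=> t; apply: functional_extensionality => i; rewrite /tu subrK.
have key : forall t, is_timing_profile len k v t -> exists2 s, s \in allseq k &
    feas (fun i => nth 0 s i) /\ reward k v Iv t <= reward k v Iv (tu (fun i => nth 0 s i)).
  move=> t ht.
  have hf : feas (fun i => t i - lp i) by apply/feas_iff; rewrite tuK.
  have [u1 [hf1 hD1 hr1]] := @main_ind _ _ (leqnn _) hf.
  have [s hs hs'] := @allseq_in k u1 hD1.
  exists s => //; split.
    apply: feas_ext hf1 => i hi; by rewrite hs'.
  have -> : reward k v Iv t = reward k v Iv (tu (fun i => t i - lp i)) by rewrite tuK.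
  apply: le_trans hr1 _.
  rewrite (@reward_ext u1 (fun i => nth 0 s i)) // => i hi; by rewrite hs'.
move=> [t0 ht0].
have [s0 hs0 [hf0 _]] := key t0 ht0.
have [s [hs hPs hmax]] := @argmax _ (allseq k) (fun s => feas (fun i => nth 0 s i))
  (fun s => reward k v Iv (tu (fun i => nth 0 s i))) (ex_intro2 _ _ s0 hs0 hf0).
exists (tu (fun i => nth 0 s i)); split.
  split; first by apply/feas_iff.
  move=> t' ht'; have [s' hs' [hf' hr']] := key t' ht'.
  exact: le_trans hr' (hmax _ hs' hf').
move=> i hi; rewrite /tu; apply: D_inCi; exact: (@allseq_D k s hs i hi).
Qed.

End Main.

Theorem theorem1 (R : realType) (V : Type) (E : V -> V -> Prop)
    (len : V -> V -> R) (Iv : V -> seq (R * R)) (k : nat) (v : nat -> V) :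
  (* task-assistance graph *)
  (forall u w : V, E u w -> 0 <= len u w) ->
  (forall u : V, uniq (Iv u)) ->
  (forall (u : V) (I : R * R), I \in Iv u -> 0 <= I.1 /\ I.1 <= I.2 /\ I.2 <= 1) ->
  (* pi = <v_0, ..., v_k> is a path, k >= 1 *)
  (1 <= k)%N ->
  (forall i : nat, (i < k)%N -> E (v i) (v i.+1)) ->
  (exists t : nat -> R, is_timing_profile len k v t) ->
  exists t : nat -> R, optimal_profile len k v Iv t /\
    forall i : nat, (i < k)%N -> inCi len k v Iv i (t i).
Proof.
move=> _ _ _ hk _ ht.
exact: (@final R V len Iv k v hk ht).
Qed.
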